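(* Let $m_{11},m_{12},m_{13},l_1,l_2\in k$ with $(m_{11},m_{12},m_{13})\neq0$, $m_{12}l_1^2+m_{13}l_2^2=m_{11}$, $l_1\neq0$ and $l_2=0$, and let $M=\begin{pmatrix}m_{11}&m_{12}&m_{13}\\ l_1m_{11}&l_1m_{12}&l_1m_{13}\\ l_2m_{11}&l_2m_{12}&l_2m_{13}\end{pmatrix}$. Then: (1) if $m_{12}\neq0$ and $m_{13}\neq0$, then $\mathcal{A}_{\mathcal{O}_{-1}(k^3)}(M)\cong\mathcal{A}_{\mathcal{O}_{-1}(k^3)}(E_{11}+E_{12}+E_{13}+E_{21}+E_{22}+E_{23})$; (2) if $m_{12}=0$ and $m_{13}\neq0$, then $\mathcal{A}_{\mathcal{O}_{-1}(k^3)}(M)\cong\mathcal{A}_{\mathcal{O}_{-1}(k^3)}(E_{13}+E_{23})$; (3) if $m_{12}\neq0$ and $m_{13}=0$, then $\mathcal{A}_{\mathcal{O}_{-1}(k^3)}(M)\cong\mathcal{A}_{\mathcal{O}_{-1}(k^3)}(E_{11}+E_{12}+E_{21}+E_{22})$.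
   Context: $k$ is an algebraically closed field of characteristic zero. $E_{ij}$ denotes the $3\times3$ matrix unit with $1$ in position $(i,j)$. For $M=(m_{ij})\in M_3(k)$, $\mathcal{A}_{\mathcal{O}_{-1}(k^3)}(M)$ is the connected cochain DG algebra whose underlying graded algebra is generated by degree-one $x_1,x_2,x_3$ subject to $x_ix_j=-x_jx_i$ ($i<j$), with differential determined by $\partial(x_i)=\sum_j m_{ij}x_j^2$ and the Leibniz rule; $\cong$ means isomorphism of DG algebras. *)

(* Defs.v *)
From HB Require Import structures.
From mathcomp Require Import all_boot all_order all_algebra.
From mathcomp Require Import mpoly.
Set Implicit Arguments. Unset Strict Implicit. Unset Printing Implicit Defensive.
Import GRing.Theory.
Local Open Scope ring_scope.

(* The -1 skew polynomial algebra O_{-1}(k^3) is modelled on the k-vector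
   space {mpoly K[3]} (basis: ordered monomials x1^a1 x2^a2 x3^a3, variables
   indexed 0,1,2 here), with the twisted multiplication
   x^a * x^b = (-1)^(sum_{j<i} a_i b_j) x^(a+b). *)

Section SkewAlg.
Variable K : fieldType.

Definition skew_sign (a b : 'X_{1..3}) : K :=
  (-1) ^+ (\sum_(i < 3) \sum_(j < 3 | (j < i)%N) (a i * b j))%N.

Definition skewmul (p q : {mpoly K[3]}) : {mpoly K[3]} :=
  \sum_(a <- msupp p) \sum_(b <- msupp q)
     (skew_sign a b * p@_a * q@_b) *: 'X_[(a + b)%MM].

Definition dexp (a : 'X_{1..3}) (i j : 'I_3) : 'X_{1..3} :=
  [multinom ((a l - (l == i)) + 2 * (l == j))%N | l < 3].

(* Differential of A(M) on the basis monomial x1^a1 x2^a2 x3^a3, obtained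
   from d(x_i) = sum_j m_ij x_j^2 by the graded Leibniz rule
   d(uv) = d(u) v + (-1)^{|u|} u d(v)  (x_j^2 is central):
   d(x_i^n) = d(x_i) x_i^(n-1) if n odd, 0 if n even. *)
Definition dmon (M : 'M[K]_3) (a : 'X_{1..3}) : {mpoly K[3]} :=
  \sum_(i < 3) (if odd (a i) then
      (-1) ^+ (\sum_(l < 3 | (l < i)%N) a l)%N *:
        \sum_(j < 3) M i j *: 'X_[dexp a i j]
    else 0).

Definition dM (M : 'M[K]_3) (p : {mpoly K[3]}) : {mpoly K[3]} :=
  \sum_(a <- msupp p) p@_a *: dmon M a.

Definition homogeneous (d : nat) (p : {mpoly K[3]}) : bool :=
  all (fun a : 'X_{1..3} => mdeg a == d) (msupp p).

Definition dg_iso (M M' : 'M[K]_3) (f : {mpoly K[3]} -> {mpoly K[3]}) : Prop :=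
  [/\ (forall (c : K) p q, f (c *: p + q) = c *: f p + f q) /\ bijective f,
      f 1 = 1,
      (forall p q, f (skewmul p q) = skewmul (f p) (f q)),
      (forall d p, homogeneous d p -> homogeneous d (f p))
    & (forall p, f (dM M p) = dM M' (f p))].

Definition dg_isomorphic (M M' : 'M[K]_3) : Prop := exists f, dg_iso M M' f.

(* matrix unit E_ij, with 1-based indices as in the paper *)
Definition E (i j : nat) : 'M[K]_3 := delta_mx (inord i.-1) (inord j.-1).

End SkewAlg.

(* Main.v *)
Require Import Defs.
From HB Require Import structures.
From mathcomp Require Import all_boot all_order all_algebra.
From mathcomp Require Import mpoly.
Import GRing.Theory.
Local Open Scope ring_scope.
From mathcomp Require Import ring.

Section Gen.
Variable K : fieldType.
Notation P := {mpoly K[3]}.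

Definition Lm (g : 'X_{1..3} -> P) (p : P) : P := \sum_(a <- msupp p) p@_a *: g a.

Lemma Lm_sup g p s : uniq s -> {subset msupp p <= s} ->
  Lm g p = \sum_(a <- s) p@_a *: g a.
Proof.
move=> us sub; rewrite /Lm.
rewrite [RHS](bigID (fun a => a \in msupp p)) /= [X in _ + X]big1 ?addr0; last first.
  by move=> a; rewrite mcoeff_msupp negbK => /eqP->; rewrite scale0r.
rewrite -[in RHS]big_filter; apply: perm_big; apply: uniq_perm;
  [exact: msupp_uniq| exact: filter_uniq |].
by move=> a; rewrite mem_filter; case: (boolP (a \in msupp p)) => // /sub ->.
Qed.

Definition lin (F : P -> P) := forall c p q, F (c *: p + q) = c *: F p + F q.

Lemma Lm_lin g : lin (Lm g).
Proof.
move=> c p q.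
set s := undup (msupp p ++ msupp q ++ msupp (c *: p + q)).
have us : uniq s := undup_uniq _.
rewrite !(@Lm_sup g _ s us) => [|a|a|a]; last 3 first.
- by rewrite mem_undup !mem_cat => ->; rewrite ?orbT.
- by rewrite mem_undup !mem_cat => ->; rewrite ?orbT.
- by rewrite mem_undup !mem_cat => ->; rewrite ?orbT.
rewrite scaler_sumr -big_split; apply: eq_bigr => a _.
by rewrite mcoeffD mcoeffZ scalerDl scalerA.
Qed.

Lemma Lm_X g a : Lm g 'X_[a] = g a.
Proof. by rewrite /Lm msuppX big_seq1 mcoeffX eqxx scale1r. Qed.

Lemma lin0 F : lin F -> F 0 = 0.
Proof.
move=> HF; have h := HF 1 0 0; rewrite scaler0 addr0 scale1r in h.
have : F 0 + F 0 - F 0 = F 0 - F 0 by rewrite -h.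
by rewrite addrK subrr.
Qed.

Lemma linZ F c p : lin F -> F (c *: p) = c *: F p.
Proof. by move=> HF; rewrite -[c *: p]addr0 HF lin0 // addr0. Qed.

Lemma linD F p q : lin F -> F (p + q) = F p + F q.
Proof. by move=> HF; have := HF 1 p q; rewrite !scale1r. Qed.

Lemma lin_sum F (I : Type) (r : seq I) (Q : pred I) (G : I -> P) : lin F ->
  F (\sum_(i <- r | Q i) G i) = \sum_(i <- r | Q i) F (G i).
Proof.
move=> HF; elim: r => [|x r IH]; first by rewrite !big_nil lin0.
by rewrite !big_cons; case: (Q x) => //; rewrite linD // IH.
Qed.

Lemma lin_comp F G : lin F -> lin G -> lin (F \o G).
Proof. by move=> HF HG c p q /=; rewrite HG HF. Qed.

Lemma lin_ext F G : lin F -> lin G -> (forall a, F 'X_[a] = G 'X_[a]) ->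
  forall p, F p = G p.
Proof.
move=> HF HG HX; elim/mpolyind => [|c m p _ _ IH]; first by rewrite !lin0.
by rewrite HF HG HX IH.
Qed.

Lemma skewmul_linl r : lin (fun p => skewmul p r).
Proof.
have E p : skewmul p r =
   Lm (fun a => \sum_(b <- msupp r) (skew_sign K a b * r@_b) *: 'X_[(a+b)%MM]) p.
  rewrite /skewmul /Lm; apply: eq_bigr => a _; rewrite scaler_sumr.
  by apply: eq_bigr => b _; rewrite scalerA mulrCA mulrA.
by move=> c p q; rewrite !E Lm_lin.
Qed.

Lemma skewmul_linr p : lin (skewmul p).
Proof.
have E q : skewmul p q = \sum_(a <- msupp p)
   Lm (fun b => (skew_sign K a b * p@_a) *: 'X_[(a+b)%MM]) q.
  by rewrite /skewmul /Lm; apply: eq_bigr => a _; apply: eq_bigr => b _;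
     rewrite scalerA [q@_b * _]mulrC.
move=> c q r; rewrite !E scaler_sumr -big_split; apply: eq_bigr => a _.
by rewrite Lm_lin.
Qed.

Lemma skmZl (x : K) (p q : P) : skewmul (x *: p) q = x *: skewmul p q.
Proof. exact: (@linZ (fun p => skewmul p q) x p (skewmul_linl q)). Qed.
Lemma skmZr (x : K) (p q : P) : skewmul p (x *: q) = x *: skewmul p q.
Proof. exact: (@linZ (skewmul p) x q (skewmul_linr p)). Qed.

Lemma skmDl x p q r : skewmul (x *: p + q) r = x *: skewmul p r + skewmul q r :> P.
Proof. exact: (skewmul_linl r x p q). Qed.
Lemma skmDr x p q r : skewmul p (x *: q + r) = x *: skewmul p q + skewmul p r :> P.
Proof. exact: (skewmul_linr p x q r). Qed.

Lemma skewmul_XX a b : skewmul 'X_[a] 'X_[b] = skew_sign K a b *: 'X_[(a+b)%MM].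
Proof. by rewrite /skewmul !msuppX !big_seq1 !mcoeffX !eqxx !mulr1. Qed.

Variable c : 'I_3 -> K.
Hypothesis c0 : forall i, c i != 0.

Definition w (c : 'I_3 -> K) (a : 'X_{1..3}) : K := \prod_(i < 3) c i ^+ a i.
Definition fm (c : 'I_3 -> K) := Lm (fun a => w c a *: 'X_[a]).

Lemma fm_lin c' : lin (fm c').
Proof. exact: Lm_lin. Qed.

Lemma fmZ c' x p : fm c' (x *: p) = x *: fm c' p.
Proof. exact: (@linZ (fm c') x p (fm_lin c')). Qed.
Lemma fm0 c' : fm c' 0 = 0.
Proof. exact: (@lin0 (fm c') (fm_lin c')). Qed.
Lemma fm_sum c' (I : Type) (r : seq I) (Q : pred I) (G : I -> P) :
  fm c' (\sum_(i <- r | Q i) G i) = \sum_(i <- r | Q i) fm c' (G i).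
Proof. exact: (@lin_sum (fm c') I r Q G (fm_lin c')). Qed.
Lemma LmZ g x p : Lm g (x *: p) = x *: Lm g p.
Proof. exact: (@linZ (Lm g) x p (Lm_lin g)). Qed.

Lemma fmX c' a : fm c' 'X_[a] = w c' a *: 'X_[a].
Proof. exact: Lm_X. Qed.

Lemma wD c' a b : w c' (a + b)%MM = w c' a * w c' b.
Proof. by rewrite /w -big_split; apply: eq_bigr => i _; rewrite mnmDE exprD. Qed.

Lemma w0 c' : w c' 0%MM = 1.
Proof. by rewrite /w big1 // => i _; rewrite mnm0E expr0. Qed.

Definition cinv (i : 'I_3) := (c i)^-1.

Lemma wV a : w c a * w cinv a = 1.
Proof.
rewrite /w /cinv -big_split big1 // => i _; rewrite exprVn /= mulfV //.
by rewrite expf_neq0.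
Qed.

Lemma wV' a : w cinv a * w c a = 1.
Proof. by rewrite mulrC wV. Qed.

Lemma prod_delta (x : 'I_3 -> K) n j :
  \prod_(l < 3) x l ^+ (n * (l == j)) = x j ^+ n.
Proof.
rewrite (bigD1 j) //= eqxx muln1 big1 ?mulr1 // => l /negbTE ->.
by rewrite muln0 expr0.
Qed.

Lemma w_dexp (a : 'X_{1..3}) (i j : 'I_3) : (0 < a i)%N -> w c (dexp a i j) * c i = w c a * c j ^+ 2.
Proof.
move=> ai.
have -> : c i = \prod_(l < 3) c l ^+ (1 * (l == i)) by rewrite prod_delta expr1.
rewrite -(prod_delta c 2 j) /w -!big_split.
apply: eq_bigr => l _ /=; rewrite -!exprD mnmE; congr (_ ^+ _).
case: (eqVneq l i) => [->|nli]; last by rewrite subn0 muln0 !addn0.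
by rewrite muln1 addnAC subnK.
Qed.

Lemma fm_bij : bijective (fm c).
Proof.
exists (fm cinv).
  apply: (@lin_ext (fun p => fm cinv (fm c p)) id).
  - by apply: lin_comp; apply: fm_lin.
  - by [].
  by move=> a; rewrite fmX fmZ fmX scalerA wV scale1r.
apply: (@lin_ext (fun p => fm c (fm cinv p)) id).
- by apply: lin_comp; apply: fm_lin.
- by [].
by move=> a; rewrite fmX fmZ fmX scalerA wV' scale1r.
Qed.

Lemma fm_mul p q : fm c (skewmul p q) = skewmul (fm c p) (fm c q).
Proof.
move: p; apply: (@lin_ext (fun p => fm c (skewmul p q))
                         (fun p => skewmul (fm c p) (fm c q))).
all: try (by move=> x p1 p2 /=; rewrite ?(skmDl, skmDr, fm_lin, skmDl, skmDr)).
move=> a; move: q.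
apply: (@lin_ext (fun q => fm c (skewmul 'X_[a] q))
                         (fun q => skewmul (fm c 'X_[a]) (fm c q))).
all: try (by move=> x p1 p2 /=; rewrite ?(skmDl, skmDr, fm_lin, skmDl, skmDr)).
move=> b; rewrite skewmul_XX !fmX fmZ fmX.
rewrite skmZl skmZr.
by rewrite skewmul_XX !scalerA wD mulrC.
Qed.

Lemma fm1 : fm c 1 = 1.
Proof. by rewrite -mpolyX0 fmX w0 scale1r. Qed.

Lemma fm_hom d p : homogeneous d p -> homogeneous d (fm c p).
Proof.
move=> /allP H; apply/allP => b /msupp_sum_le /flattenP [s /mapP [a aS ->]].
rewrite mcoeff_msupp !mcoeffZ mcoeffX; case: (eqVneq a b) => [<-|]; last by rewrite mulr0n !mulr0 eqxx.
move=> _; apply: H.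
by move: aS; rewrite mem_filter.
Qed.

Lemma fm_d (M M' : 'M[K]_3) :
  (forall i j, M i j * c j ^+ 2 = c i * M' i j) ->
  forall p, fm c (dM M p) = dM M' (fm c p).
Proof.
move=> HM.
apply: (@lin_ext (fm c \o Lm (dmon M)) (Lm (dmon M') \o fm c)).
all: try (by apply: lin_comp; [apply: fm_lin| apply: Lm_lin]).
all: try (by apply: lin_comp; [apply: Lm_lin| apply: fm_lin]).
move=> a /=;  rewrite Lm_X fmX LmZ Lm_X /dmon.
rewrite fm_sum scaler_sumr; apply: eq_bigr => i _.
case: ifP => oi; last by rewrite fm0 scaler0.
rewrite fmZ fm_sum scalerA mulrC -scalerA.
congr (_ *: _); rewrite scaler_sumr; apply: eq_bigr => j _.
rewrite fmZ fmX !scalerA; congr (_ *: _).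
apply: (mulIf (c0 i)).
have ai : (0 < a i)%N by case: (a i) oi.
by rewrite -mulrA w_dexp // mulrCA HM mulrCA mulrC.
Qed.

Lemma diag_iso (M M' : 'M[K]_3) :
  (forall i j, M i j * c j ^+ 2 = c i * M' i j) -> dg_isomorphic M M'.
Proof.
move=> HM; exists (fm c); split.
- by split; [move=> x p q; apply: fm_lin | apply: fm_bij].
- exact: fm1.
- exact: fm_mul.
- exact: fm_hom.
- exact: fm_d.
Qed.
End Gen.

Lemma Eent (K : fieldType) (i j : nat) (a b : 'I_3) : (0 < i <= 3)%N -> (0 < j <= 3)%N ->
  E K i j a b = ((a == i.-1 :> nat) && (b == j.-1 :> nat))%:R.
Proof.
move=> /andP[i0 hi] /andP[j0 hj]; rewrite /E mxE -!val_eqE /= !inordK //.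
  by case: j j0 hj.
by case: i i0 hi.
Qed.

Theorem lemma7p2 (k : closedFieldType) (hchar : [pchar k] =i pred0)
  (m11 m12 m13 l1 l2 : k)
  (hm : ~ [/\ m11 = 0, m12 = 0 & m13 = 0])
  (hrel : m12 * l1 ^+ 2 + m13 * l2 ^+ 2 = m11)
  (hl1 : l1 != 0) (hl2 : l2 = 0) :
  let M : 'M[k]_3 :=
    \matrix_(i < 3, j < 3) ([:: 1; l1; l2]`_i * [:: m11; m12; m13]`_j) in
  [/\ (m12 != 0 -> m13 != 0 ->
         dg_isomorphic M (E k 1 1 + E k 1 2 + E k 1 3 + E k 2 1 + E k 2 2 + E k 2 3)),
      (m12 = 0 -> m13 != 0 ->
         dg_isomorphic M (E k 1 3 + E k 2 3))
    & (m12 != 0 -> m13 = 0 ->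
         dg_isomorphic M (E k 1 1 + E k 1 2 + E k 2 1 + E k 2 2))].
Proof.
move=> M; subst l2.
have e11 : m11 = m12 * l1 ^+ 2 by rewrite -hrel expr0n /= mulr0 addr0.
split => h12 h13.
{ set c1 := (m12 * l1 ^+ 2)^-1.
  have c1n : c1 != 0 by rewrite invr_eq0 mulf_neq0 // expf_neq0.
  have [s hs] : exists s : k, s ^+ 2 = c1 / m13.
    have [x hx] := @solve_monicpoly k 2%N (fun i => if i == 0%N then c1 / m13 else 0) isT.
    by exists x; rewrite hx !big_ord_recl big_ord0 /= mul0r expr0 mulr1 add0r addr0.
  have sn : s != 0.
    apply/eqP => s0; move: hs; rewrite s0 expr0n /= => /eqP; rewrite eq_sym mulf_eq0 (negbTE c1n) /= invr_eq0.
    by rewrite (negbTE h13).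
  apply: (@diag_iso k (fun i => [:: c1; l1 * c1; s]`_i)).
    by case=> [[|[|[|//]]] ?] /=; rewrite ?mulf_neq0.
  case=> [[|[|[|//]]] ?]; case=> [[|[|[|//]]] ?]; rewrite !mxE -!val_eqE /= ?inordK //= ?mulr1n ?mulr0n ?addr0 ?add0r ?mul0r ?mulr0 ?mul1r ?mulr1 ?hs //.
  all: rewrite /c1 ?e11; field.
  all: by rewrite ?hl1 ?h12 ?h13.
}
{ have e0 : m11 = 0 by rewrite e11 h12 mul0r.
  apply: (@diag_iso k (fun i => [:: m13; l1 * m13; 1]`_i)).
    by case=> [[|[|[|//]]] ?] /=; rewrite ?mulf_neq0 ?oner_neq0.
  case=> [[|[|[|//]]] ?]; case=> [[|[|[|//]]] ?]; rewrite !mxE -!val_eqE /= ?inordK //= ?mulr1n ?mulr0n ?addr0 ?add0r ?mul0r ?mulr0 ?mul1r ?mulr1 ?e0 ?h12 ?mul0r ?mulr0 //.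
  all: by rewrite ?expr1n ?mulr1 ?mul0r.
}
{ set c1 := (m12 * l1 ^+ 2)^-1.
  have c1n : c1 != 0 by rewrite invr_eq0 mulf_neq0 // expf_neq0.
  apply: (@diag_iso k (fun i => [:: c1; l1 * c1; 1]`_i)).
    by case=> [[|[|[|//]]] ?] /=; rewrite ?mulf_neq0 ?oner_neq0.
  case=> [[|[|[|//]]] ?]; case=> [[|[|[|//]]] ?]; rewrite !mxE -!val_eqE /= ?inordK //= ?mulr1n ?mulr0n ?addr0 ?add0r ?mul0r ?mulr0 ?mul1r ?mulr1 ?h13 ?mul0r ?mulr0 //.
  all: rewrite /c1 ?e11; field.
  all: by rewrite ?hl1 ?h12 ?h13.
}
Qed.
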